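(* Let $M$ be a closed manifold, $f\colon M\to M$ a map, $n\ge2$, and $k,l$ positive integers with $kl=n$. Let $\Phi_n(f)\colon M^n\to M^n$, $(x_1,\dots,x_n)\mapsto(f(x_n),f(x_1),\dots,f(x_{n-1}))$, which is equivariant for the cyclic action of $\mathbb{Z}_n=\langle g\rangle$, $g(x_1,\dots,x_n)=(x_n,x_1,\dots,x_{n-1})$. Identify $(M^n)^{\mathbb{Z}_k}$ (fixed points of the subgroup of order $k$) with $M^l$ via the first $l$ coordinates, and let $\Phi_n^k(f)$ be the restriction of $\Phi_n(f)$ to $(M^n)^{\mathbb{Z}_k}$; its fixed points are exactly the points $(x,f(x),\dots,f^{l-1}(x))$ (repeated $k$ times) with $f^l(x)=x$. Then \[\mathrm{Fix}^c(\Phi_n^k(f))\to\mathrm{Fix}^c(f^l),\qquad[(x,f(x),\dots,f^{l-1}(x))]\mapsto[x]\] is a well-defined bijection.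
   Context: For a self-map $h$ of a space $Y$, two fixed points $y,y'$ lie in the same fixed point class if there is a path $\alpha$ from $y$ to $y'$ with $\alpha\simeq h(\alpha)$ relative to endpoints; $\mathrm{Fix}^c(h)$ denotes the set of fixed point classes. $f^l$ is the $l$-fold composite of $f$. *)

(* Defs.v *)
From mathcomp Require Import all_boot all_order all_algebra.
From mathcomp Require Import all_classical all_reals all_analysis.
From mathcomp Require Import Rstruct Rstruct_topology.
From Stdlib Require Import Rdefinitions.
Notation R := Rdefinitions.R.

Set Implicit Arguments.
Unset Strict Implicit.
Unset Printing Implicit Defensive.

Local Open Scope classical_set_scope.
Local Open Scope ring_scope.

Definition unitI : set R := `[0%R, 1%R].

Definition local_chart (M : topologicalType) (d : nat) (U : set M)
    (phi : M -> 'rV[R]_d) : Prop :=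
  open U /\ open (phi @` U) /\ {in U &, injective phi} /\
  {within U, continuous phi} /\
  exists psi : 'rV[R]_d -> M,
    {within phi @` U, continuous psi} /\ (forall x, U x -> psi (phi x) = x).

Definition closed_manifold (M : topologicalType) : Prop :=
  compact [set: M] /\ hausdorff_space M /\
  exists d : nat, forall x : M, exists (U : set M) (phi : M -> 'rV[R]_d),
    U x /\ local_chart U phi.

(** Paths are maps R -> Y continuous on
    [0,1]; homotopies are maps R*R -> Y continuous on [0,1]x[0,1]. *)
Definition path_in (Y : topologicalType) (A : set Y) (alpha : R -> Y)
    (y y' : Y) : Prop :=
  {within unitI, continuous alpha} /\ alpha 0 = y /\ alpha 1 = y' /\
  (forall s, unitI s -> A (alpha s)).

Definition homotopic_rel_ends_in (Y : topologicalType) (A : set Y)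
    (alpha beta : R -> Y) : Prop :=
  exists H : R * R -> Y,
    {within unitI `*` unitI, continuous H} /\
    (forall s t, unitI s -> unitI t -> A (H (s, t))) /\
    (forall s, unitI s -> H (s, 0) = alpha s) /\
    (forall s, unitI s -> H (s, 1) = beta s) /\
    (forall t, unitI t -> H (0, t) = alpha 0) /\
    (forall t, unitI t -> H (1, t) = alpha 1).

Definition is_fixed (Y : Type) (h : Y -> Y) (y : Y) : Prop := h y = y.

Definition same_fp_class_in (Y : topologicalType) (A : set Y) (h : Y -> Y)
    (y y' : Y) : Prop :=
  A y /\ A y' /\ h y = y /\ h y' = y' /\
  exists alpha : R -> Y, path_in A alpha y y' /\
    homotopic_rel_ends_in A alpha (h \o alpha).

Definition same_fp_class (Y : topologicalType) (h : Y -> Y) (y y' : Y) :=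
  same_fp_class_in [set: Y] h y y'.

(* M^n with the product topology; tuples are indexed by 'I_n = {0,...,n-1}. *)
Definition Mpow (M : topologicalType) (n : nat) : topologicalType :=
  {ptws 'I_n -> M}.

Definition cyc_gen (M : topologicalType) (n : nat) (x : Mpow M n) : Mpow M n :=
  fun i => x (ord_pred i).

Definition Phi (M : topologicalType) (n : nat) (f : M -> M)
    (x : Mpow M n) : Mpow M n :=
  fun i => f (x (ord_pred i)).

(* (M^n)^{Z_k}, for k l = n: the fixed points of the subgroup of order k of
   Z_n = <g>, which is generated by g^l. *)
Definition cyc_fixed_set (M : topologicalType) (n l : nat) : set (Mpow M n) :=
  [set x | iter l (@cyc_gen M n) x = x].

(* Main.v *)
Require Import Defs.
From mathcomp Require Import all_boot all_order all_algebra.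
From mathcomp Require Import all_classical all_reals all_analysis.
From mathcomp Require Import Rstruct Rstruct_topology.
From mathcomp Require Import lra zify.
Import Order.TTheory GRing.Theory Num.Theory.
Local Open Scope classical_set_scope.
Local Open Scope ring_scope.

Lemma unitIP (s : R) : unitI s <-> (0 <= s <= 1).
Proof. rewrite /unitI /= in_itv /=. done. Qed.

Lemma within_comp (X Y Z : topologicalType) (A : set Y) (B : set X)
  (g : Y -> Z) (h : X -> Y) :
  {within A, continuous g} -> {within B, continuous h} ->
  (forall x, B x -> A (h x)) -> {within B, continuous (g \o h)}.
Proof.
move=> /continuousP cg /continuousP ch hBA; apply/continuousP => W oW.
have /open_subspaceP [V oV VA] := cg W oW.
have oh := ch V oV.
rewrite -open_subspaceIT.
have -> : ((from_subspace B (g \o h)) @^-1` W `&` B) = (from_subspace B h @^-1` V `&` B).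
  apply/seteqP; split => x [Hx Bx]; split => //.
  - have : (g @^-1` W `&` A) (h x) by split => //; exact: hBA.
    by rewrite -VA => -[].
  - have : (V `&` A) (h x) by split => //; exact: hBA.
    by rewrite VA => -[].
by rewrite open_subspaceIT.
Qed.

Lemma within_eq (X Z : topologicalType) (B : set X) (f g : X -> Z) :
  (forall x, B x -> f x = g x) -> {within B, continuous f} -> {within B, continuous g}.
Proof.
move=> fg; apply: subspace_eq_continuous => x; rewrite inE => Bx; exact: fg.
Qed.

Lemma within_glob_comp (X Y Z : topologicalType) (B : set X) (g : Y -> Z) (h : X -> Y) :
  continuous g -> {within B, continuous h} -> {within B, continuous (g \o h)}.
Proof.
move=> cg ch; apply: (@within_comp _ _ _ setT) => //.
exact: continuous_subspaceT.
Qed.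

Lemma into_prod (X M : topologicalType) (n : nat) (g : X -> Mpow M n) :
  (forall i, continuous (fun x => g x i)) -> continuous g.
Proof.
move=> cg x; apply/cvg_sup => i.
move: x; apply: continuous_comp_initial.
exact: cg.
Qed.

Lemma proj_cont (M : topologicalType) (n : nat) (i : 'I_n) :
  continuous (fun p : Mpow M n => p i).
Proof. exact: (@proj_continuous _ (fun _ : 'I_n => M) i). Qed.

Lemma cont_fst : continuous (@fst R R).
Proof. move=> x; exact: cvg_fst. Qed.
Lemma cont_snd : continuous (@snd R R).
Proof. move=> x; exact: cvg_snd. Qed.
Lemma c2o : continuous (fun t : R^o => t + t).
Proof. move=> t. apply: continuousD; exact: cvg_id. Qed.
Lemma c3o : continuous (fun t : R^o => t + t - 1).
Proof. move=> t. have := @continuousB _ _ _ (fun t : R^o => t + t) (fun _ => 1) t (c2o t) (cvg_cst _). apply. Qed.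
Lemma c2 : continuous (fun t : R => t + t). Proof. exact: c2o. Qed.
Lemma c3 : continuous (fun t : R => t + t - 1). Proof. exact: c3o. Qed.
Lemma cont_phi1 : continuous (fun st : R * R => (st.1, st.2 + st.2)).
Proof.
move=> x.
apply: (@cvg_pair _ _ _ (nbhs x) (nbhs x.1) (nbhs (x.2 + x.2))); first exact: cvg_fst.
exact: (continuous_comp (cont_snd x) (c2 x.2)).
Qed.
Lemma cont_phi2 : continuous (fun st : R * R => (st.1, st.2 + st.2 - 1)).
Proof.
move=> x.
apply: (@cvg_pair _ _ _ (nbhs x) (nbhs x.1) (nbhs (x.2 + x.2 - 1))); first exact: cvg_fst.
exact: (continuous_comp (cont_snd x) (c3 x.2)).
Qed.
Lemma closed_itvR (a b : R) : closed [set` `[a, b]].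
Proof.
have -> : [set` `[a, b]] = [set x | a <= x] `&` [set x | x <= b].
  apply/seteqP; split => x /=; rewrite in_itv /=; first by move=> /andP[].
  by move=> [-> ->].
apply: closedI; [exact: closed_ge | exact: closed_le].
Qed.

Lemma closed_P (a b : R) : closed (@fst R R @^-1` unitI `&` @snd R R @^-1` `[a, b]).
Proof.
apply: closedI; apply: preimage_closed.
- move=> x _; exact: cont_fst.
- exact: closed_itvR.
- move=> x _; exact: cont_snd.
- exact: closed_itvR.
Qed.

Lemma homot_trans (Y : topologicalType) (a b c : R -> Y) :
  homotopic_rel_ends_in setT a b -> homotopic_rel_ends_in setT b c ->
  homotopic_rel_ends_in setT a c.
Proof.
move=> [H1 [cH1 [_ [H10 [H11 [H1l H1r]]]]]] [H2 [cH2 [_ [H20 [H21 [H2l H2r]]]]]].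
have I0 : unitI 0 by apply/unitIP; lra.
have I1 : unitI 1 by apply/unitIP; lra.
exists (fun st => if st.2 <= 2^-1 then H1 (st.1, st.2 + st.2) else H2 (st.1, st.2 + st.2 - 1)).
split; last first.
  split=> // ; split.
    move=> s Is /=; rewrite ifT; last lra.
    by rewrite addr0 H10.
  split.
    move=> s Is /=; rewrite ifF; last (apply/negbTE; rewrite -ltNge; lra).
    have -> : (1 + 1 - 1 : R) = 1 by lra.
    by rewrite H21.
  split.
    move=> t It /=; case: ifP => h; first by rewrite H1l // unitIP; move: h; move/unitIP: It; lra.
    move/negbT: h; rewrite -ltNge => h.
    rewrite H2l; last by rewrite unitIP; move: h; move/unitIP: It; lra.
    by rewrite -H11 // H1l.
  move=> t It /=; case: ifP => h; first by rewrite H1r // unitIP; move: h; move/unitIP: It; lra.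
  move/negbT: h; rewrite -ltNge => h.
  rewrite H2r; last by rewrite unitIP; move: h; move/unitIP: It; lra.
  by rewrite -H11 // H1r.
have -> : unitI `*` unitI = (@fst R R @^-1` unitI `&` @snd R R @^-1` `[0, 2^-1]) `|`
                            (@fst R R @^-1` unitI `&` @snd R R @^-1` `[2^-1, 1]).
  apply/seteqP; split => -[s t] /=.
    move=> [Is /unitIP It]; rewrite /unitI /= !in_itv /=.
    have [h|h] := leP t (2^-1); [left | right]; split => //; apply/andP; lra.
  move=> -[] [Is]; rewrite /= in_itv /= => /andP [h1 h2]; split => //; apply/unitIP; lra.
apply: withinU_continuous; [exact: closed_P | exact: closed_P | |].
- apply: (@within_eq _ _ _ (H1 \o (fun st : R * R => (st.1, st.2 + st.2)))).
    move=> [s t] [/= _]; rewrite /= in_itv /= => /andP [_ ->] //.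
  apply: (@within_comp _ _ _ (unitI `*` unitI) _ H1 (fun st : R * R => (st.1, st.2 + st.2)) cH1).
    exact: continuous_subspaceT cont_phi1.
  move=> [s t] [/= Is]; rewrite /= in_itv /= => /andP [h1 h2]; split => //=.
  by apply/unitIP; lra.
- apply: (@within_eq _ _ _ (H2 \o (fun st : R * R => (st.1, st.2 + st.2 - 1)))).
    move=> [s t] [/= Is]; rewrite /= in_itv /= => /andP [h1 h2].
    case: ifP => // h3.
    have ht : t = 2^-1 by lra.
    rewrite ht; have -> : (2^-1 + 2^-1 : R) = 1 by lra.
    have -> : (1 - 1 : R) = 0 by lra.
    by rewrite H11 // H20.
  apply: (@within_comp _ _ _ (unitI `*` unitI) _ H2 (fun st : R * R => (st.1, st.2 + st.2 - 1)) cH2).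
    exact: continuous_subspaceT cont_phi2.
  move=> [s t] [/= Is]; rewrite /= in_itv /= => /andP [h1 h2]; split => //=.
  by apply/unitIP; lra.
Qed.
Lemma pred_mod n (i : 'I_n) : ((ord_pred i).+1 %% n = i)%N.
Proof.
rewrite /= -addn1 modnDml addn1.
have hn : (0 < n)%N by case: i => /= m; case: n => // m' _.
have -> : ((i + n).-1.+1 = i + n)%N by rewrite prednK // addn_gt0 hn orbT.
by rewrite modnDr modn_small.
Qed.

Lemma pred_modl n l (i : 'I_n) : (l %| n)%N -> ((ord_pred i).+1 %% l = i %% l)%N.
Proof.
move=> ln; rewrite -(modn_dvdm _ ln) pred_mod //.
Qed.

Lemma iter_pred_mod n l (i : 'I_n) j : (l %| n)%N ->
  ((iter j (@ord_pred n) i + j) %% l = i %% l)%N.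
Proof.
move=> ln; elim: j => [|j IH]; first by rewrite addn0.
rewrite iterS addnS -addSn -modnDml pred_modl // modnDml //.
Qed.

Lemma iter_pred_modl n l (i : 'I_n) : (l %| n)%N ->
  ((iter l (@ord_pred n) i) %% l = i %% l)%N.
Proof. by move=> ln; rewrite -(@iter_pred_mod n l i l ln) modnDr. Qed.

Lemma iter_cyc (M : topologicalType) n j (x : Mpow M n) (i : 'I_n) :
  iter j (@cyc_gen M n) x i = x (iter j (@ord_pred n) i).
Proof.
elim: j i => [|j IH] i //.
by rewrite iterS /cyc_gen IH -iterSr.
Qed.

Lemma iter_mod (T : Type) (f : T -> T) l x : iter l f x = x ->
  forall m, iter m f x = iter (m %% l) f x.
Proof.
move=> hx m; rewrite {1}(divn_eq m l) addnC iterD.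
congr iter; elim: (m %/ l)%N => [|q IH] //.
by rewrite mulSn iterD IH.
Qed.

Lemma mod1 x l : (0 < l)%N -> (x.+1 %% l = 0)%N -> (x %% l).+1 = l.
Proof.
move=> l0 h.
have h1 : ((x %% l).+1 %% l = 0)%N by rewrite -addn1 modnDml addn1.
have : (x %% l < l)%N by rewrite ltn_mod.
rewrite leq_eqVlt => /orP [/eqP //|lt].
by move: h1; rewrite modn_small.
Qed.

Lemma mod2 x l y : (0 < l)%N -> (x.+1 %% l = y)%N -> y != 0%N -> (x %% l).+1 = y.
Proof.
move=> l0 h y0.
have h1 : ((x %% l).+1 %% l = y)%N by rewrite -addn1 modnDml addn1.
have : (x %% l < l)%N by rewrite ltn_mod.
rewrite leq_eqVlt => /orP [/eqP e|lt].
  by move: h1; rewrite e modnn => e0; rewrite -e0 eqxx in y0.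
by move: h1; rewrite modn_small.
Qed.

Lemma part1 (M : topologicalType) (f : M -> M) n l (hl : (0 < l)%N) (ln : (l %| n)%N)
  (lle : (l <= n)%N) (i0 : 'I_n) (hi0 : nat_of_ord i0 = 0%N) (p : Mpow M n) :
  (@cyc_fixed_set M n l p /\ Phi f p = p) <->
     (iter l f (p i0) = p i0 /\
      forall i : 'I_n, p i = iter (nat_of_ord i %% l) f (p i0)).
Proof.
split.
  move=> [hA hP].
  have hO : forall m (Hm : (m < n)%N), p (Ordinal Hm) = iter m f (p i0).
    elim=> [|m IH] Hm.
      by congr p; apply: val_inj.
    have Hm' : (m < n)%N by apply: ltnW.
    rewrite -{1}hP /Phi iterS -(IH Hm'); congr (f (p _)); apply: val_inj => /=.
    by rewrite modnDr modn_small.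
  have hfix : iter l f (p i0) = p i0.
    have [ltl|eql] := ltnP l n.
      rewrite -(hO l ltl).
      have hv : nat_of_ord (iter l (@ord_pred n) (Ordinal ltl)) = 0%N.
        have := @iter_pred_mod n n (Ordinal ltl) l (dvdnn n).
        rewrite /= (modn_small ltl).
        set v := nat_of_ord _.
        have : (v < n)%N by rewrite /v ltn_ord.
        move=> vn hv.
        case: (ltnP (v + l) n) => h.
          by move: hv; rewrite modn_small // => /eqP; rewrite -{2}(add0n l) eqn_add2r => /eqP.
        have e : (v + l = (v + l - n) + n)%N by rewrite subnK.
        move: hv; rewrite e modnDr modn_small; last by lia.
        lia.
      have := congr1 (fun q : Mpow M n => q (Ordinal ltl)) hA.
      rewrite /= iter_cyc => <-; congr p; apply: val_inj => /=; by rewrite hv hi0.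
    have eln : l = n by apply/eqP; rewrite eqn_leq lle eql.
    have Hn1 : (n.-1 < n)%N by rewrite prednK ?leqnn //; lia.
    have e := congr1 (fun q : Mpow M n => q i0) hP.
    rewrite eln; apply/esym; rewrite -{1}e /= /Phi.
    have -> : ord_pred i0 = Ordinal Hn1.
      apply: val_inj => /=; rewrite hi0 add0n modn_small //.
    rewrite hO -iterS prednK //; lia.
  split => // i.
  have := hO i (ltn_ord i); rewrite (@iter_mod _ f l _ hfix) => <-.
  by congr p; apply: val_inj.
move=> [hfix hp]; split.
  rewrite /cyc_fixed_set /=; apply: functional_extensionality_dep => i.
  by rewrite iter_cyc (hp (iter _ _ _)) (hp i) iter_pred_modl.
apply: functional_extensionality_dep => i.
rewrite /Phi (hp (ord_pred i)) (hp i) -(@iter_mod _ f l _ hfix (ord_pred i)) -iterS.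
by rewrite (@iter_mod _ f l _ hfix (ord_pred i).+1) pred_modl.
Qed.

Lemma iter_cont (M : topologicalType) (f : M -> M) j :
  continuous f -> continuous (iter j f).
Proof.
move=> cf; elim: j => [|j IH] x /=; first exact: cvg_id.
exact: (continuous_comp (IH x) (cf _)).
Qed.

Lemma homot_ext (Y : topologicalType) (A : set Y) (a b b' : R -> Y) :
  (forall s, unitI s -> b s = b' s) ->
  homotopic_rel_ends_in A a b -> homotopic_rel_ends_in A a b'.
Proof.
move=> bb [H [cH [HA [H0 [H1 [Hl Hr]]]]]]; exists H.
split => //; split => //; split => //; split; last by split.
by move=> s Is; rewrite H1 //; exact: bb.
Qed.

Lemma homot_refl (Y : topologicalType) (a : R -> Y) :
  {within unitI, continuous a} -> homotopic_rel_ends_in setT a a.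
Proof.
move=> ca; exists (fun st => a st.1); split.
  apply: (@within_comp _ _ _ unitI _ a (@fst R R) ca).
    exact: continuous_subspaceT cont_fst.
  by move=> [s t] [].
by split => //; split => //; split => //; split => //.
Qed.

Theorem lemma5p7 (M : topologicalType) (f : M -> M) (n k l : nat)
    (hM : closed_manifold M) (hf : continuous f)
    (hn : (2 <= n)%N) (hk : (0 < k)%N) (hl : (0 < l)%N) (hkl : (k * l)%N = n)
    (i0 : 'I_n) (hi0 : nat_of_ord i0 = 0%N) :
  (forall p : Mpow M n,
     (@cyc_fixed_set M n l p /\ Phi f p = p) <->
     (iter l f (p i0) = p i0 /\
      forall i : 'I_n, p i = iter (nat_of_ord i %% l) f (p i0))) /\
  (forall p p' : Mpow M n,
     same_fp_class_in (@cyc_fixed_set M n l) (Phi f) p p' ->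
     same_fp_class (iter l f) (p i0) (p' i0)) /\
  (forall p p' : Mpow M n,
     @cyc_fixed_set M n l p -> Phi f p = p ->
     @cyc_fixed_set M n l p' -> Phi f p' = p' ->
     same_fp_class (iter l f) (p i0) (p' i0) ->
     same_fp_class_in (@cyc_fixed_set M n l) (Phi f) p p') /\
  (forall x : M, iter l f x = x ->
     exists p : Mpow M n,
       @cyc_fixed_set M n l p /\ Phi f p = p /\ p i0 = x).
Proof.
have ln : (l %| n)%N by rewrite -hkl dvdn_mull.
have lle : (l <= n)%N by rewrite -hkl leq_pmull.
have P1 := @part1 M f n l hl ln lle i0 hi0.
split; first exact: P1.
split.
  move=> p p' [Ap [Ap' [Pp [Pp' [alpha [[calpha [a0 [a1 aA]]] [H [cH [HA [H0 [H1 [Hl Hr]]]]]]]]]]]].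
  have fp := (P1 p).1 (conj Ap Pp).
  have fp' := (P1 p').1 (conj Ap' Pp').
  split => //; split => //; split; first exact: fp.1.
  split; first exact: fp'.1.
  exists (fun s => alpha s i0); split.
    split; first apply: (@within_glob_comp _ _ _ _ (fun q : Mpow M n => q i0) alpha) => //; first exact: (@proj_cont M n i0).
    split; first exact: (congr1 (fun q : Mpow M n => q i0) a0).
    split => //; exact: (congr1 (fun q : Mpow M n => q i0) a1).
  have claim : forall j, homotopic_rel_ends_in setT (fun s => alpha s i0)
      (fun s => iter j f (alpha s (iter j (@ord_pred n) i0))).
    elim=> [|j IH].
      apply: homot_refl; apply: (@within_glob_comp _ _ _ _ (fun q : Mpow M n => q i0) alpha) => //; exact: proj_cont.
    apply: (homot_trans _ _ _ _ IH).
    set c := iter j (@ord_pred n) i0.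
    exists (fun st => iter j f (H st c)); split.
      apply: (@within_glob_comp _ _ _ _ (fun q : Mpow M n => iter j f (q c)) H) => //.
      move=> q; apply: continuous_comp; [exact: proj_cont | exact: iter_cont].
    split => //; split.
      by move=> s Is /=; rewrite H0.
    split.
      by move=> s Is /=; rewrite H1 // /= /Phi -iterSr iterS.
    split.
      by move=> t It /=; rewrite Hl.
    by move=> t It /=; rewrite Hr.
  apply: (homot_ext _ _ _ _ _ _ (claim l)) => s Is /=.
  have := congr1 (fun q : Mpow M n => q i0) (aA s Is).
  by rewrite /= iter_cyc => ->.
split.
  move=> p p' Ap Pp Ap' Pp' [_ [_ [fx [fx' [beta [[cbeta [b0 [b1 _]]] [G [cG [_ [G0 [G1 [Gl Gr]]]]]]]]]]]].
  have fp := (P1 p).1 (conj Ap Pp).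
  have fp' := (P1 p').1 (conj Ap' Pp').
  split => //; split => //; split => //; split => //.
  pose alpha (s : R) : Mpow M n := fun i : 'I_n => iter (nat_of_ord i %% l) f (beta s).
  have Aal : forall s, @cyc_fixed_set M n l (alpha s).
    move=> s; rewrite /cyc_fixed_set /=; apply: functional_extensionality_dep => i.
    by rewrite iter_cyc /alpha iter_pred_modl.
  have calpha : {within unitI, continuous alpha}.
    apply: (@into_prod (subspace unitI) M n (from_subspace unitI alpha)) => i.
    exact: (@within_glob_comp _ _ _ unitI (iter (nat_of_ord i %% l) f) beta (iter_cont _ _ _ hf) cbeta).
  exists alpha; split.
    split => //; split.
      apply: functional_extensionality_dep => i.
      by rewrite /alpha b0 (fp.2 i).
    split => //.
    apply: functional_extensionality_dep => i.
    by rewrite /alpha b1 (fp'.2 i).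
  pose K (st : R * R) : Mpow M n := fun i : 'I_n =>
    if (nat_of_ord i %% l == 0)%N then G st else iter (nat_of_ord i %% l) f (beta st.1).
  exists K; split.
    apply: (@into_prod (subspace (unitI `*` unitI)) M n (from_subspace _ K)) => i.
    change (continuous (from_subspace (unitI `*` unitI) (fun st => K st i))).
    rewrite /K /=; case: (nat_of_ord i %% l == 0)%N; first exact: cG.
    apply: (@within_glob_comp _ _ _ _ (iter (nat_of_ord i %% l) f) (beta \o (@fst R R)) (iter_cont _ _ _ hf)).
    apply: (@within_comp _ _ _ unitI _ beta (@fst R R) cbeta).
      exact: continuous_subspaceT cont_fst.
    by move=> [s t] [].
  split.
    move=> s t _ _; rewrite /cyc_fixed_set /=; apply: functional_extensionality_dep => i.
    by rewrite iter_cyc /K iter_pred_modl.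
  split.
    move=> s Is; apply: functional_extensionality_dep => i.
    rewrite /K /alpha /=; case: ifP => [/eqP ->|_] //=; exact: G0.
  split.
    move=> s Is; apply: functional_extensionality_dep => i.
    rewrite /K /alpha /Phi /=; case: ifP => /eqP h.
      rewrite G1 // -iterS (mod1 _ _ hl) // pred_modl //.
    rewrite -iterS (mod2 _ _ _ hl (pred_modl _ _ i ln)) //.
    by apply/eqP.
  split.
    move=> t It; apply: functional_extensionality_dep => i.
    rewrite /K /alpha /=; case: ifP => [/eqP h|//]; rewrite h /=; exact: Gl.
  move=> t It; apply: functional_extensionality_dep => i.
  rewrite /K /alpha /=; case: ifP => [/eqP h|//]; rewrite h /=; exact: Gr.
move=> x hx.
pose p : Mpow M n := fun i : 'I_n => iter (nat_of_ord i %% l) f x.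
have p0 : p i0 = x by rewrite /p hi0 mod0n.
have [h1 h2] : @cyc_fixed_set M n l p /\ Phi f p = p.
  by apply/(P1 p); rewrite p0; split.
by exists p.
Qed.
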